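(* Let $n,N\ge1$ be integers, $0<p<1$, $0<\epsilon_1<1$, and $\beta>0$ with $L=\beta n$ a positive integer. Define $$\beta_0=\frac{\log_2\left(\dfrac{\epsilon_1}{2^{n}N^2\left((1+2p-p^2)^n-1\right)}\right)}{n\log_2\left(1-\frac{1}{2}(1-p)^2\right)}.$$ If $\beta\ge\beta_0$, then in the random model described in the context, $P\big(|\mathsf{Y_{faulty}}|>1\big)<\epsilon_1$.
   Context: Model: Let $M=2^n$ and $C=\{0,1\}^n=\{\mathbf{x}_1,\dots,\mathbf{x}_M\}$ (addresses). Data parts $\mathbf{d}_1,\dots,\mathbf{d}_M$ are independent and uniform on $\{0,1\}^L$; strand $i$ is $(\mathbf{x}_i,\mathbf{d}_i)$. Each strand is transmitted $N$ times through $\mathsf{BEC}(p)$ (each symbol independently replaced by $*$ with probability $p$, independently across transmissions and strands); $\mathcal{S}_N((\mathbf{x}_i,\mathbf{d}_i))$ is the multiset of the $N$ reads of strand $i$, and $\mathcal{Y}$ the multiset of all $MN$ reads. Two words $\mathbf{u},\mathbf{v}\in\{0,1,*\}^\ell$ agree, $\mathbf{u}\cong\mathbf{v}$, if $u_k=v_k$ wherever neither is erased; reads agree if both address parts and data parts agree. A read $(\mathbf{y},\mathbf{d}')\in\mathcal{S}_N((\mathbf{x},\mathbf{d}))$ is faulty if it agrees with some read of a strand $(\tilde{\mathbf{x}},\tilde{\mathbf{d}})$ with $\tilde{\mathbf{x}}\ne\mathbf{x}$; $\mathsf{Y_{faulty}}$ is the multiset of faulty reads. *)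

(* Defs.v *)
From HB Require Import structures.
From mathcomp Require Import all_boot all_order all_algebra.
From mathcomp Require Import all_classical all_reals all_analysis.
Set Implicit Arguments. Unset Strict Implicit. Unset Printing Implicit Defensive.
Import Order.TTheory GRing.Theory Num.Theory.
Local Open Scope ring_scope.

(* Addresses: the 2^n words of {0,1}^n; strand x has address x. *)
Definition addr_t (n : nat) := {ffun 'I_n -> bool}.

(* An outcome of the random experiment:
   - data : the data part d_x (L bits) of each strand x,
   - eA   : erasure indicators of the address symbols of read t of strand x,
   - eD   : erasure indicators of the data symbols of read t of strand x. *)
Definition outcome (n N L : nat) :=
  ({ffun addr_t n * 'I_L -> bool} *
   {ffun addr_t n * 'I_N * 'I_n -> bool} *
   {ffun addr_t n * 'I_N * 'I_L -> bool})%type.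

Section Model.
Variables (n N L : nat).

Definition o_data (w : outcome n N L) := w.1.1.
Definition o_eA (w : outcome n N L) := w.1.2.
Definition o_eD (w : outcome n N L) := w.2.

Definition weight {R : realType} (p : R) (w : outcome n N L) : R :=
  (\prod_(i : addr_t n * 'I_L) (2^-1 : R)) *
  (\prod_(j : addr_t n * 'I_N * 'I_n) (if o_eA w j then p else 1 - p)) *
  (\prod_(j : addr_t n * 'I_N * 'I_L) (if o_eD w j then p else 1 - p)).

Definition Prob {R : realType} (p : R) (E : pred (outcome n N L)) : R :=
  \sum_(w | E w) weight p w.

(* Read t of strand x; None stands for the erasure symbol "*". *)
Definition read_addr (w : outcome n N L) (x : addr_t n) (t : 'I_N) (k : 'I_n)
  : option bool := if o_eA w (x, t, k) then None else Some (x k).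
Definition read_data (w : outcome n N L) (x : addr_t n) (t : 'I_N) (k : 'I_L)
  : option bool := if o_eD w (x, t, k) then None else Some (o_data w (x, k)).

Definition agree (m : nat) (u v : 'I_m -> option bool) : bool :=
  [forall k, (u k == None) || (v k == None) || (u k == v k)].

Definition faulty (w : outcome n N L) (x : addr_t n) (t : 'I_N) : bool :=
  [exists x' : addr_t n, exists t' : 'I_N,
     [&& x' != x, agree (read_addr w x t) (read_addr w x' t')
       & agree (read_data w x t) (read_data w x' t')]].

(* |Y_faulty| : number of faulty reads (multiset, counted over all M N reads) *)
Definition num_faulty (w : outcome n N L) : nat :=
  #|[set xt : addr_t n * 'I_N | faulty w xt.1 xt.2]|.

End Model.

Definition log2 {R : realType} (x : R) : R := ln x / ln 2.

(* Main.v *)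
Require Import Defs.
From HB Require Import structures.
From mathcomp Require Import all_boot all_order all_algebra.
From mathcomp Require Import all_classical all_reals all_analysis.
From mathcomp Require Import ring.
Import Order.TTheory GRing.Theory Num.Theory.
Local Open Scope ring_scope.
Set Implicit Arguments. Unset Strict Implicit. Unset Printing Implicit Defensive.

Section Marg.
Variable R : comRingType.
Definition indb (b : bool) : R := if b then 1 else 0.

Lemma indbA a b : indb (a && b) = indb a * indb b.
Proof. by case: a; case: b; rewrite /indb ?mulr1 ?mulr0 ?mul0r. Qed.

Lemma indb_forall (I : finType) (P : pred I) : indb [forall i, P i] = \prod_i indb (P i).
Proof.
case: forallP => H.
  by rewrite /indb big1 // => i _; rewrite H.
have [i Hi] : exists i, ~~ P i.
  by apply/existsP; rewrite -negb_forall; apply/negP => /forallP.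
by rewrite (bigD1 i) //= /indb (negbTE Hi) mul0r.
Qed.

Variables (I K : finType) (mu : bool -> R) (e1 e2 : K -> I).
Hypothesis mu1 : mu true + mu false = 1.
Hypothesis inj1 : injective e1.
Hypothesis inj2 : injective e2.
Hypothesis disj : forall k k', e1 k != e2 k'.

Lemma part_prod (e : K -> I) (F : K -> R) :
  \prod_k F k = \prod_i \prod_(k | e k == i) F k.
Proof. by rewrite (partition_big e xpredT). Qed.

Lemma marg_point (c1 c2 : K -> bool) :
  \sum_(f : {ffun I -> bool}) (\prod_i mu (f i)) *
     indb [forall k, (f (e1 k), f (e2 k)) == (c1 k, c2 k)] =
  \prod_k (mu (c1 k) * mu (c2 k)).
Proof.
have E (f : {ffun I -> bool}) : indb [forall k, (f (e1 k), f (e2 k)) == (c1 k, c2 k)] =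
   \prod_i ((\prod_(k | e1 k == i) indb (f i == c1 k)) *
            (\prod_(k | e2 k == i) indb (f i == c2 k))).
  rewrite indb_forall big_split /=.
  under eq_bigr do rewrite xpair_eqE indbA.
  rewrite big_split /= (part_prod e1) (part_prod e2).
  congr (_ * _); apply: eq_bigr => i _; apply: eq_bigr => k /eqP <- //.
rewrite (eq_bigr (fun f : {ffun I -> bool} => \prod_i (mu (f i) * ((\prod_(k | e1 k == i) indb (f i == c1 k)) *
            (\prod_(k | e2 k == i) indb (f i == c2 k))))));
  last by move=> f _; rewrite E -big_split.
rewrite -(bigA_distr_bigA (fun i v => mu v * ((\prod_(k | e1 k == i) indb (v == c1 k)) *
            (\prod_(k | e2 k == i) indb (v == c2 k))))) /=.
rewrite big_split /= (part_prod e1) (part_prod e2) -big_split /=.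
apply: eq_bigr => i _.
case: (pickP (fun k => e1 k == i)) => [k1 Hk1|H1].
  have P1 : (fun k => e1 k == i) =1 pred1 k1.
    move=> k /=; apply/eqP/eqP => [|->]; last exact/eqP.
    by move/eqP: Hk1 => <- /inj1.
  have P2 : (fun k => e2 k == i) =1 xpred0.
    move=> k /=; apply/negbTE; move/eqP: Hk1 => <-; rewrite eq_sym; exact: disj.
  rewrite big_bool /= !(big_pred1 _ P1, big_pred0 _ _ _ _ P2) /indb.
  by case: (c1 k1); rewrite /= ?mulr1 ?mulr0 ?addr0 ?add0r.
have P1 : (fun k => e1 k == i) =1 xpred0 by [].
rewrite big_bool /= !(big_pred0 _ _ _ _ P1).
case: (pickP (fun k => e2 k == i)) => [k2 Hk2|H2].
  have P2 : (fun k => e2 k == i) =1 pred1 k2.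
    move=> k /=; apply/eqP/eqP => [|->]; last exact/eqP.
    by move/eqP: Hk2 => <- /inj2.
  rewrite !(big_pred1 _ P2) /indb.
  by case: (c2 k2); rewrite /= ?mulr1 ?mulr0 ?addr0 ?add0r ?mul1r.
have P2 : (fun k => e2 k == i) =1 xpred0 by [].
by rewrite !(big_pred0 _ _ _ _ P2) !mulr1.
Qed.

Lemma sum_ind_eq (T : finType) (x : T) (F : T -> R) :
  \sum_g indb (x == g) * F g = F x.
Proof.
rewrite (bigD1 x) //= big1 ?addr0 /indb ?eqxx ?mul1r // => g /negbTE.
by rewrite eq_sym => ->; rewrite mul0r.
Qed.

Lemma marg2 (Phi : {ffun K -> bool * bool} -> R) :
  \sum_(f : {ffun I -> bool}) (\prod_i mu (f i)) * Phi [ffun k => (f (e1 k), f (e2 k))] =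
  \sum_(g : {ffun K -> bool * bool}) (\prod_k (mu (g k).1 * mu (g k).2)) * Phi g.
Proof.
under eq_bigr => f _ do rewrite -sum_ind_eq mulr_sumr.
rewrite exchange_big /=; apply: eq_bigr => g _.
rewrite -(marg_point (fun k => (g k).1) (fun k => (g k).2)) mulr_suml.
apply: eq_bigr => f _; rewrite mulrA; congr (_ * _ * _).
congr indb; apply/eqP/forallP => [<- k|H]; first by rewrite ffunE.
by apply/ffunP => k; rewrite ffunE (eqP (H k)); case: (g k).
Qed.

Lemma marg2_prod (G : K -> bool * bool -> R) :
  \sum_(f : {ffun I -> bool}) (\prod_i mu (f i)) * \prod_k G k (f (e1 k), f (e2 k)) =
  \prod_k \sum_(u : bool * bool) mu u.1 * mu u.2 * G k u.
Proof.
transitivity (\sum_(f : {ffun I -> bool}) (\prod_i mu (f i)) *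
   (fun g : {ffun K -> bool * bool} => \prod_k G k (g k)) [ffun k => (f (e1 k), f (e2 k))]).
  by apply: eq_bigr => f _ /=; congr (_ * _); apply: eq_bigr => k _; rewrite ffunE.
rewrite (marg2 (fun g : {ffun K -> bool * bool} => \prod_k G k (g k))) (bigA_distr_bigA (fun k u => mu u.1 * mu u.2 * G k u)).
by apply: eq_bigr => g _ /=; rewrite -big_split.
Qed.
End Marg.


Section Model2.
Variables (R : realType) (n N L : nat) (p : R).
Hypothesis p01 : 0 < p < 1.

Definition mu (b : bool) : R := if b then p else 1 - p.
Definition rr : R := 2 * p - p ^+ 2.
Definition qq : R := 1 - 2^-1 * (1 - p) ^+ 2.

Lemma mu1 : mu true + mu false = 1.
Proof. by rewrite /mu addrC subrK. Qed.

Lemma sum_pair (T1 T2 : finType) (F : T1 * T2 -> R) :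
  \sum_w F w = \sum_a \sum_b F (a, b).
Proof. by rewrite pair_bigA; apply: eq_bigr => -[]. Qed.

Definition pairOK (w : outcome n N L) (x : addr_t n) (t : 'I_N) (x' : addr_t n) (t' : 'I_N) :=
  [&& x' != x, agree (read_addr w x t) (read_addr w x' t')
       & agree (read_data w x t) (read_data w x' t')].

Lemma agreeA (w : outcome n N L) x t x' t' : agree (read_addr w x t) (read_addr w x' t') =
  [forall k, [|| o_eA w (x, t, k), o_eA w (x', t', k) | x k == x' k]].
Proof.
apply: eq_forallb => k; rewrite /read_addr.
by case: (o_eA w (x, t, k)); case: (o_eA w (x', t', k)).
Qed.

Lemma agreeD (w : outcome n N L) x t x' t' : agree (read_data w x t) (read_data w x' t') =
  [forall k, [|| o_eD w (x, t, k), o_eD w (x', t', k) | o_data w (x, k) == o_data w (x', k)]].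
Proof.
apply: eq_forallb => k; rewrite /read_data.
by case: (o_eD w (x, t, k)); case: (o_eD w (x', t', k)).
Qed.


Lemma pair4 (F : bool * bool -> R) :
  \sum_(u : bool * bool) F u = F (true, true) + F (true, false) + (F (false, true) + F (false, false)).
Proof. by rewrite sum_pair !big_bool. Qed.

Lemma hA (x x' : addr_t n) (t t' : 'I_N) : x' != x ->
  \sum_(b : {ffun addr_t n * 'I_N * 'I_n -> bool}) (\prod_j mu (b j)) *
     \prod_k indb R [|| b (x, t, k), b (x', t', k) | x k == x' k] =
  \prod_k (if x k == x' k then 1 else rr).
Proof.
move=> xx.
rewrite (marg2_prod (e1 := fun k => (x, t, k)) (e2 := fun k => (x', t', k)) mu1
   _ _ _ (fun k u => indb R [|| u.1, u.2 | x k == x' k])).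
- apply: eq_bigr => k _; rewrite pair4 /= /indb /mu /rr.
  by case: (x k == x' k) => /=; ring.
- by move=> k k' H; case: H.
- by move=> k k' H; case: H.
- by move=> k k'; rewrite !xpair_eqE eq_sym (negbTE xx).
Qed.

Lemma hD (x x' : addr_t n) (t t' : 'I_N) (a : {ffun addr_t n * 'I_L -> bool}) : x' != x ->
  \sum_(c : {ffun addr_t n * 'I_N * 'I_L -> bool}) (\prod_j mu (c j)) *
     \prod_k indb R [|| c (x, t, k), c (x', t', k) | a (x, k) == a (x', k)] =
  \prod_k (if a (x, k) == a (x', k) then 1 else rr).
Proof.
move=> xx.
rewrite (marg2_prod (e1 := fun k => (x, t, k)) (e2 := fun k => (x', t', k)) mu1
   _ _ _ (fun k u => indb R [|| u.1, u.2 | a (x, k) == a (x', k)])).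
- apply: eq_bigr => k _; rewrite pair4 /= /indb /mu /rr.
  by case: (a (x, k) == a (x', k)) => /=; ring.
- by move=> k k' H; case: H.
- by move=> k k' H; case: H.
- by move=> k k'; rewrite !xpair_eqE eq_sym (negbTE xx).
Qed.

Lemma hD2 (x x' : addr_t n) : x' != x ->
  \sum_(a : {ffun addr_t n * 'I_L -> bool}) (\prod_(j : addr_t n * 'I_L) (2^-1 : R)) *
     \prod_k (if a (x, k) == a (x', k) then 1 else rr) = qq ^+ L.
Proof.
move=> xx.
have h1 : (2^-1 : R) + 2^-1 = 1 by rewrite [RHS](splitr 1) mul1r.
rewrite (marg2_prod (mu := fun _ => 2^-1) (e1 := fun k => (x, k)) (e2 := fun k => (x', k)) h1
   _ _ _ (fun k u => if u.1 == u.2 then 1 else rr)).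
- rewrite (eq_bigr (fun _ => qq)); first by rewrite prodr_const card_ord.
  move=> k _; by rewrite pair4 /= /rr /qq; field.
- by move=> k k' H; case: H.
- by move=> k k' H; case: H.
- by move=> k k'; rewrite !xpair_eqE eq_sym (negbTE xx).
Qed.


Lemma quad (x x' : addr_t n) (t t' : 'I_N) : x' != x ->
  \sum_(w : outcome n N L) weight p w * indb R (pairOK w x t x' t') =
  (\prod_k (if x k == x' k then 1 else rr)) * qq ^+ L.
Proof.
move=> xx.
rewrite sum_pair sum_pair.
transitivity (\sum_(a : {ffun addr_t n * 'I_L -> bool})
   \sum_(b : {ffun addr_t n * 'I_N * 'I_n -> bool})
   \sum_(c : {ffun addr_t n * 'I_N * 'I_L -> bool})
   ((\prod_(j : addr_t n * 'I_L) (2^-1 : R)) *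
      ((\prod_j mu (b j)) * \prod_k indb R [|| b (x, t, k), b (x', t', k) | x k == x' k])) *
   ((\prod_j mu (c j)) *
     \prod_k indb R [|| c (x, t, k), c (x', t', k) | a (x, k) == a (x', k)])).
  apply: eq_bigr => a _; apply: eq_bigr => b _; apply: eq_bigr => c _.
  rewrite /pairOK xx agreeA agreeD /= indbA !indb_forall /weight /o_eA /o_eD /o_data /=.
  ring.
rewrite (eq_bigr (fun a : {ffun addr_t n * 'I_L -> bool} =>
   (\prod_k (if x k == x' k then 1 else rr)) *
   ((\prod_(j : addr_t n * 'I_L) (2^-1 : R)) *
   \prod_k (if a (x, k) == a (x', k) then 1 else rr)))).
  by rewrite -mulr_sumr (hD2 xx).
move=> a _.
rewrite (eq_bigr (fun b : {ffun addr_t n * 'I_N * 'I_n -> bool} =>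
   ((\prod_(j : addr_t n * 'I_L) (2^-1 : R)) *
      ((\prod_j mu (b j)) * \prod_k indb R [|| b (x, t, k), b (x', t', k) | x k == x' k])) *
   \prod_k (if a (x, k) == a (x', k) then 1 else rr))).
  by rewrite -mulr_suml -mulr_sumr (hA _ _ xx) mulrCA mulrA.
by move=> b _; rewrite -mulr_sumr (hD _ _ _ xx).
Qed.


Lemma sumr_constT (T : finType) (c : R) : \sum_(i : T) c = c *+ #|T|.
Proof. by rewrite -sumr_const; apply: eq_bigl => i; rewrite inE. Qed.

Definition count (w : outcome n N L) : R :=
  \sum_(q : (addr_t n * 'I_N) * (addr_t n * 'I_N)) indb R (pairOK w q.1.1 q.1.2 q.2.1 q.2.2).

Lemma sumP (x : addr_t n) :
  \sum_(x' : addr_t n) \prod_k (if x k == x' k then 1 else rr) = (1 + rr) ^+ n.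
Proof.
rewrite -(bigA_distr_bigA (fun k b => if x k == b then 1 else rr)) /=.
rewrite (eq_bigr (fun _ => 1 + rr)) ?prodr_const ?card_ord // => k _.
by rewrite big_bool; case: (x k) => //=; rewrite addrC.
Qed.

Lemma total :
  \sum_(w : outcome n N L) weight p w * count w =
  2 ^+ n * N%:R ^+ 2 * ((1 + 2 * p - p ^+ 2) ^+ n - 1) * qq ^+ L.
Proof.
rewrite /count.
under eq_bigr do rewrite mulr_sumr.
rewrite exchange_big /=.
rewrite (eq_bigr (fun q : (addr_t n * 'I_N) * (addr_t n * 'I_N) =>
   indb R (q.2.1 != q.1.1) * ((\prod_k (if q.1.1 k == q.2.1 k then 1 else rr)) * qq ^+ L))); last first.
  move=> [[x t] [x' t']] _ /=; case: (boolP (x' != x)) => xx.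
    by rewrite (quad _ _ xx) /indb mul1r.
  rewrite /indb mul0r big1 // => w _; rewrite /pairOK (negbTE xx) /= /indb mulr0 //.
rewrite sum_pair (eq_bigr (fun _ => ((1 + rr) ^+ n - 1) * qq ^+ L *+ N)); last first.
  move=> [x t] _ /=; rewrite sum_pair /=.
  under eq_bigr do rewrite sumr_constT card_ord.
  rewrite sumrMnl; congr (_ *+ _).
  under eq_bigr do rewrite mulrA.
  rewrite -mulr_suml; congr (_ * _).
  have := sumP x; rewrite (bigD1 x) //= big1 => [H|k _]; last by rewrite eqxx.
  rewrite -H [1 + _]addrC addrK [RHS]big_mkcond /=; apply: eq_bigr => x' _.
  by rewrite /indb; case: (x' != x); rewrite ?mul1r ?mul0r.
rewrite sumr_constT card_prod (card_ffun 'I_n bool) card_bool !card_ord.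
rewrite -mulrnA -[LHS]mulr_natr !natrM natrX /rr addrA.
move: ((1 + 2 * p - p ^+ 2) ^+ n) (2 ^+ n : R) (qq ^+ L) (N%:R : R) => A B Q M; ring.
Qed.


Lemma indb_ge0 b : 0 <= indb R b.
Proof. by case: b; rewrite /indb. Qed.

Lemma count_ge0 (w : outcome n N L) : 0 <= count w.
Proof. by apply: sumr_ge0 => q _; apply: indb_ge0. Qed.

Lemma weight_ge0 (w : outcome n N L) : 0 <= weight p w.
Proof.
case/andP: p01 => p0 p1.
have h : forall b : bool, 0 <= (if b then p else 1 - p).
  by case; [apply: ltW | rewrite subr_ge0; apply: ltW].
rewrite /weight; apply: mulr_ge0; first apply: mulr_ge0.
- by apply: prodr_ge0 => i _; rewrite invr_ge0.
- by apply: prodr_ge0 => i _; apply: h.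
- by apply: prodr_ge0 => i _; apply: h.
Qed.

Lemma faultyP (w : outcome n N L) x t : faulty w x t ->
  exists x' t', pairOK w x t x' t'.
Proof. by case/existsP => x' /existsP [t' H]; exists x', t'. Qed.

Lemma count_ge2 (w : outcome n N L) : (1 < num_faulty w)%N -> 2 <= count w.
Proof.
case/card_gt1P => -[x1 t1] [[x2 t2] [H1 H2 H12]].
rewrite inE /= in H1; rewrite inE /= in H2.
have [x1' [t1' P1]] := faultyP H1.
have [x2' [t2' P2]] := faultyP H2.
rewrite /count (bigD1 ((x1, t1), (x1', t1'))) //= (bigD1 ((x2, t2), (x2', t2'))) /=; last first.
  by apply/eqP => -[E1 E2 _ _]; move: H12; rewrite E1 E2 eqxx.
rewrite P1 P2 /indb addrA -[2]/(1 + 1 : R) lerDl.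
by apply: sumr_ge0 => q _; apply: indb_ge0.
Qed.

Lemma prob_bound :
  2 * Prob (n := n) (N := N) (L := L) p (fun w => (1 < num_faulty w)%N) <=
  \sum_(w : outcome n N L) weight p w * count w.
Proof.
rewrite /Prob mulr_sumr [X in _ <= X](bigID (fun w => (1 < num_faulty w)%N)) /=.
rewrite -[X in X <= _]addr0; apply: lerD.
  apply: ler_sum => w E; rewrite mulrC; apply: ler_wpM2l; first exact: weight_ge0.
  exact: count_ge2.
by apply: sumr_ge0 => w _; apply: mulr_ge0; [apply: weight_ge0 | apply: count_ge0].
Qed.

End Model2.

From mathcomp Require Import lra.
Unset Implicit Arguments.

Theorem lemma7 (R : realType) (n N L : nat) (p eps1 beta : R) :
  (1 <= n)%N -> (1 <= N)%N -> 0 < p < 1 -> 0 < eps1 < 1 -> 0 < beta ->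
  (0 < L)%N -> L%:R = beta * n%:R ->
  beta >= log2 (eps1 / (2 ^+ n * N%:R ^+ 2 * ((1 + 2 * p - p ^+ 2) ^+ n - 1)))
          / (n%:R * log2 (1 - 2^-1 * (1 - p) ^+ 2)) ->
  Prob (n := n) (N := N) (L := L) p (fun w => (1 < num_faulty w)%N) < eps1.
Proof.
move=> n1 N1 p01 e01 b0 L0 HL Hb.
have key := @prob_bound R n N L p p01.
rewrite total in key.
case/andP: p01 => p0 p1; case/andP: e01 => e0 e1.
set C := 2 ^+ n * N%:R ^+ 2 * ((1 + 2 * p - p ^+ 2) ^+ n - 1) in key Hb.
have hr : 1 < 1 + 2 * p - p ^+ 2 by nra.
have K0 : 0 < (1 + 2 * p - p ^+ 2) ^+ n - 1.
  by rewrite subr_gt0 exprn_egt1 // -lt0n.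
have C0 : 0 < C.
  rewrite /C; apply: mulr_gt0 => //; apply: mulr_gt0; first by rewrite exprn_gt0.
  by rewrite exprn_gt0 // ltr0n.
have q0 : 0 < qq p by rewrite /qq; nra.
have q1 : qq p < 1 by rewrite /qq; nra.
have lnq : ln (qq p) < 0 by apply: ln_lt0; rewrite q0 q1.
have ln2 : 0 < ln (2 : R) by apply: ln_gt0; lra.
have D0 : n%:R * (ln (qq p) / ln 2) < 0.
  by rewrite pmulr_rlt0 ?ltr0n // pmulr_llt0 ?invr_gt0.
rewrite /log2 -/(qq p) in Hb.
rewrite ler_ndivrMr // in Hb.
have H2 : L%:R * ln (qq p) <= ln (eps1 / C).
  have H : L%:R * ln (qq p) / ln 2 <= ln (eps1 / C) / ln 2.
    by rewrite HL -!mulrA.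
  by rewrite ler_pM2r ?invr_gt0 in H.
have H3 : qq p ^+ L <= eps1 / C.
  rewrite -ler_ln ?posrE ?exprn_gt0 ?divr_gt0 //.
  by rewrite lnXn // -mulr_natl.
have H4 : C * qq p ^+ L <= eps1.
  by rewrite -(ler_pM2l C0) [C * (_ / C)]mulrCA divff ?gt_eqF // mulr1 in H3.
have H5 : C * qq p ^+ L = 2 ^+ n * N%:R ^+ 2 * ((1 + 2 * p - p ^+ 2) ^+ n - 1) * qq p ^+ L by [].
lra.
Qed.
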